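(* Let $(T,\preceq,\Sigma,\mathcal S,\mathcal M)$ be an $(\mathcal S,\mathcal M)$-tree, $n\in\omega$, $f\in\mathcal{AM}$ with domain $T(\le n)$, and $m\in\omega$ such that either $n=0$ and $0\le m\le\tilde f(0)$, or $n>0$ and $\tilde f(n-1)<m\le\tilde f(n)$. Define $f|_m\colon T(\le n)\to T$ by $f|_m(a)=f(a)|_m$ for $a\in T(n)$ and $f|_m(a)=f(a)$ for $a\in T(<n)$. Then $f|_m\in\mathcal{AM}$, and there exists $g\in\mathcal{AM}^m_1$ such that $g\circ f|_m=f$.
   Context: A tree is a partially ordered set $(T,\preceq)$ such that for every $a\in T$ the set $\{b\in T:b\prec a\}$ is finite and linearly ordered by $\preceq$. The level of $a$ is $\ell(a)=|\{b\in T:b\prec a\}|$; $T(n)=\{a\in T:\ell(a)=n\}$, and $T(\le n)$, $T(<n)$ are defined analogously. For $a\in T$ and $n\le \ell(a)$, $a|_n$ denotes the unique predecessor of $a$ at level $n$ (with $a|_{\ell(a)}=a$). A node $b$ is an immediate successor of $a$ if $a\prec b$ and there is no $c$ with $a\prec c\prec b$. An $\mathcal S$-tree is a quadruple $(T,\preceq,\Sigma,\mathcal S)$ where $(T,\preceq)$ is a countable tree in which every node has finitely many immediate successors and $T(0)$ is finite, $\Sigma$ is a set, and $\mathcal S\colon T\times T^{<\omega}\times\Sigma\to T$ is a partial function such that: (S1) if $\mathcal S(a,\bar p,c)$ is defined then it is an immediate successor of $a$ and every entry of $\bar p$ has level at most $\ell(a)-1$; (S2) if $\mathcal S(a,\bar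 p,c)=\mathcal S(b,\bar q,d)$ then $a=b$, $\bar p=\bar q$ and $c=d$; (S3) for every $a\in T$ and every immediate successor $b$ of $a$ there are $\bar p\in T^{<\omega}$ and $c\in\Sigma$ with $b=\mathcal S(a,\bar p,c)$. For $S\subseteq T$, a map $f\colon S\to T$ is level-preserving if $\ell(a)=\ell(b)$ implies $\ell(f(a))=\ell(f(b))$; then $\tilde f(n)$ denotes $\ell(f(a))$ for any $a\in S$ with $\ell(a)=n$. An injection $F\colon T\to T$ is shape-preserving if (i) it is level-preserving; (ii) whenever $\mathcal S(a,\bar p,c)$ is defined, $\mathcal S(F(a),F(\bar p),c)$ is defined and $\mathcal S(F(a),F(\bar p),c)\preceq F(\mathcal S(a,\bar p,c))$, where $F(\bar p)$ is the tuple of images of the entries of $\bar p$; (iii) for every $a\in T(0)$ and $b\in T$ with $a\preceq b$ we have $a\preceq F(b)$. A shape-preserving $F$ skips level $m$ if $m\notin\tilde F[\omega]$, and skips only level $m$ if $\tilde F[\omega]=\omega\setminus\{m\}$. An $(\mathcal S,\mathcal M)$-tree is a quintuple $(T,\preceq,\Sigma,\mathcal S,\mathcal M)$ where $(T,\preceq,\Sigma,\mathcal S)$ is an $\mathcal S$-tree and $\mathcal M$ is a set of shape-preserving functions $T\to T$ such that: (M1) $\mathrm{Id}_T\in\mathcal M$, $\mathcal M$ is closed under composition, and whenever $(F_i)_{i\in\omega}$ is a sequence in $\mathcal M$ with $F_i\restriction T(\le i)=F_{i+1}\restriction T(\le i)$ for all $i$, there is $F_\infty\in\mathcal M$ with $F_\infty\restriction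 T(\le i)=F_i\restriction T(\le i)$ for all $i$; (M2) for every $n\in\omega$ and every $F\in\mathcal M$ with $\tilde F(n)>0$ which skips level $\tilde F(n)-1$, there are $F_1,F_2\in\mathcal M$ such that $F_2$ skips only level $\tilde F(n)-1$ and $(F_2\circ F_1)\restriction T(\le n)=F\restriction T(\le n)$; (M3) for all $n<m$ in $\omega$ there is $F^n_m\in\mathcal M$ skipping only level $m$ such that $F^n_m(b)=\mathcal S(b,\bar p,c)$ whenever $a\in T(n)$, $b\in T(m)$, $\bar p\in T^{<\omega}$, $c\in\Sigma$, $\mathcal S(a,\bar p,c)$ is defined and $\mathcal S(a,\bar p,c)\preceq b$. Notation: $\mathcal M^n=\{F\in\mathcal M: F\restriction T(<n)\text{ is the identity}\}$; $\mathcal{AM}=\{F\restriction T(<k): F\in\mathcal M,\ k>0\}$; $\mathcal{AM}^n_k=\{F\restriction T(<n+k):F\in\mathcal M^n\}$ (so elements of $\mathcal{AM}^m_1$ have domain $T(\le m)$ and are the identity on $T(<m)$). *)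

(* Defs.v *)
From Stdlib Require Import List Arith Lia ClassicalEpsilon.
Import ListNotations.
Set Implicit Arguments.

Section Trees.
Variable T : Type.
Variable le : T -> T -> Prop.

Definition lt (a b : T) : Prop := le a b /\ a <> b.

Definition is_level (a : T) (k : nat) : Prop :=
  exists l : list T, NoDup l /\ (forall b, lt b a <-> In b l) /\ length l = k.

Definition lev (a : T) : nat := epsilon (inhabits 0) (is_level a).

Definition restr (a : T) (k : nat) : T :=
  epsilon (inhabits a) (fun b => le b a /\ lev b = k).

Definition imm_succ (a b : T) : Prop :=
  lt a b /\ ~ exists c, lt a c /\ lt c b.

Definition is_tree : Prop :=
  (forall a, le a a) /\
  (forall a b, le a b -> le b a -> a = b) /\
  (forall a b c, le a b -> le b c -> le a c) /\
  (forall a, exists l : list T, forall b, lt b a <-> In b l) /\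
  (forall a b c, lt b a -> lt c a -> le b c \/ le c b).

Definition level_preserving_on (P : T -> Prop) (f : T -> T) : Prop :=
  forall a b, P a -> P b -> lev a = lev b -> lev (f a) = lev (f b).

Definition ftil (f : T -> T) (k : nat) : nat :=
  epsilon (inhabits 0) (fun j => exists a, lev a = k /\ lev (f a) = j).

Definition skips (F : T -> T) (m : nat) : Prop := ~ exists a, lev (F a) = m.
Definition skips_only (F : T -> T) (m : nat) : Prop :=
  forall j, (exists a, lev (F a) = j) <-> j <> m.

Variable Sigma : Type.
Variable S : T -> list T -> Sigma -> option T.

Definition S_tree : Prop :=
  is_tree /\
  (exists code : T -> nat, forall a b, code a = code b -> a = b) /\
  (forall a, exists l : list T, forall b, imm_succ a b <-> In b l) /\
  (exists l : list T, forall a, lev a = 0 <-> In a l) /\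
  (forall a p c b, S a p c = Some b ->
     imm_succ a b /\ (forall x, In x p -> lev x < lev a)) /\
  (forall a p c b q d e, S a p c = Some e -> S b q d = Some e ->
     a = b /\ p = q /\ c = d) /\
  (forall a b, imm_succ a b -> exists p c, S a p c = Some b).

Definition shape_preserving (F : T -> T) : Prop :=
  (forall a b, F a = F b -> a = b) /\
  level_preserving_on (fun _ => True) F /\
  (forall a p c b, S a p c = Some b ->
     exists b', S (F a) (map F p) c = Some b' /\ le b' (F b)) /\
  (forall a b, lev a = 0 -> le a b -> le a (F b)).

Variable M : (T -> T) -> Prop.

Definition SM_tree : Prop :=
  S_tree /\
  (forall F, M F -> shape_preserving F) /\
  M (fun a => a) /\
  (forall F G, M F -> M G -> M (fun a => F (G a))) /\
  (forall Fs : nat -> T -> T, (forall i, M (Fs i)) ->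
     (forall i a, lev a <= i -> Fs i a = Fs (Datatypes.S i) a) ->
     exists Finf, M Finf /\ forall i a, lev a <= i -> Finf a = Fs i a) /\
  (forall n F, M F -> 0 < ftil F n -> skips F (ftil F n - 1) ->
     exists F1 F2, M F1 /\ M F2 /\ skips_only F2 (ftil F n - 1) /\
       forall a, lev a <= n -> F2 (F1 a) = F a) /\
  (forall n m, n < m -> exists F, M F /\ skips_only F m /\
     forall a b p c s, lev a = n -> lev b = m -> S a p c = Some s -> le s b ->
       S b p c = Some (F b)).

Definition inAM (f : T -> T) (k : nat) : Prop :=
  0 < k /\ exists F, M F /\ forall a, lev a < k -> f a = F a.

Definition inAMnk (f : T -> T) (n k : nat) : Prop :=
  exists F, M F /\ (forall a, lev a < n -> F a = a) /\
    forall a, lev a < n + k -> f a = F a.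

Definition fcut (f : T -> T) (n m : nat) (a : T) : T :=
  if Nat.eqb (lev a) n then restr (f a) m else f a.

End Trees.

(* Main.v *)
Require Import Defs.
From Stdlib Require Import List Arith Lia Classical ClassicalEpsilon.
Import ListNotations.
Set Implicit Arguments.
Unset Strict Implicit.
From Stdlib Require Import List Arith Lia Classical ClassicalEpsilon.

Lemma nodup_ex (T : Type) (l : list T) :
  exists l', NoDup l' /\ forall x, In x l <-> In x l'.
Proof.
  induction l as [|a r [l' [Hn Hi]]].
  - exists []; split; [constructor | tauto].
  - destruct (classic (In a l')) as [Ha|Ha].
    + exists l'; split; auto. intro x; simpl; rewrite Hi; split; [intros [->|?]; auto | auto].
    + exists (a :: l'); split; [constructor; auto|]. intro x; simpl; rewrite Hi; tauto.
Qed.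

Lemma lev_spec (T : Type) (le : T -> T -> Prop) (Ht : is_tree le) (a : T) :
  is_level le a (lev le a).
Proof.
  unfold lev. apply epsilon_spec.
  destruct Ht as (_&_&_&Hf&_). destruct (Hf a) as [l Hl].
  destruct (nodup_ex l) as [l' [Hn Hi]].
  exists (length l'), l'. split; auto. split; auto. intro b; rewrite Hl; auto.
Qed.

Lemma lev_list (T : Type) (le : T -> T -> Prop) (Ht : is_tree le) (a : T) :
  exists l, NoDup l /\ (forall b, lt le b a <-> In b l) /\ length l = lev le a.
Proof. exact (lev_spec Ht a). Qed.

Lemma lt_trans (T : Type) (le : T -> T -> Prop) (Ht : is_tree le) a b c :
  lt le a b -> lt le b c -> lt le a c.
Proof.
  destruct Ht as (Hr&Ha&Htr&_). intros [H1 H2] [H3 H4]. split; eauto.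
  intro E; subst. apply H2. apply Ha; auto.
Qed.

Lemma lt_lev (T : Type) (le : T -> T -> Prop) (Ht : is_tree le) a b :
  lt le a b -> lev le a < lev le b.
Proof.
  intro Hab.
  destruct (lev_list Ht a) as (la&Hna&Hia&<-).
  destruct (lev_list Ht b) as (lb&Hnb&Hib&<-).
  assert (NoDup (a :: la)).
  { constructor; auto. rewrite <- Hia. intros [_ H]; auto. }
  apply (NoDup_incl_length H). intros x [<-|Hx]; apply Hib; auto.
  apply Hia in Hx. eapply lt_trans; eauto.
Qed.

Lemma le_same_lev (T : Type) (le : T -> T -> Prop) (Ht : is_tree le) a b :
  le a b -> lev le a = lev le b -> a = b.
Proof.
  intros H E. destruct (classic (a = b)) as [|N]; auto.
  assert (lev le a < lev le b) by (apply (lt_lev Ht); split; auto). lia.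
Qed.

Lemma comp_below (T : Type) (le : T -> T -> Prop) (Ht : is_tree le) u v x :
  le u x -> le v x -> le u v \/ le v u.
Proof.
  intros Hu Hv. destruct (classic (u = x)) as [->|Nu]; auto.
  destruct (classic (v = x)) as [->|Nv]; auto.
  destruct Ht as (_&_&_&_&Hl). apply (Hl x); split; auto.
Qed.

Lemma max_ex (T : Type) (le : T -> T -> Prop) (Ht : is_tree le) x (l : list T) :
  (forall b, In b l -> lt le b x) -> l <> [] ->
  exists y, In y l /\ forall b, In b l -> le b y.
Proof.
  induction l as [|a r IH]; intros Hl Hne; [congruence|].
  destruct r as [|c r'].
  - exists a. split; [left; auto|]. intros b [<-|[]]. destruct Ht as (Hr&_); auto.
  - destruct IH as (y&Hy&Hm); [intros; apply Hl; right; auto | congruence |].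
    destruct Ht as (Hr&Ha&Htr&Hf&Hlin) eqn:E.
    destruct (Hlin x a y (Hl a (or_introl eq_refl)) (Hl y (or_intror Hy))) as [H|H].
    + exists y; split; [right; auto|]. intros b [<-|Hb]; auto.
    + exists a; split; [left; auto|]. intros b [<-|Hb]; eauto.
Qed.

Lemma parent (T : Type) (le : T -> T -> Prop) (Ht : is_tree le) x k :
  lev le x = S k -> exists y, imm_succ le y x /\ lev le y = k.
Proof.
  intro Hx.
  destruct (lev_list Ht x) as (lx&Hnx&Hix&Hlx).
  destruct (@max_ex T le Ht x lx) as (y&Hy&Hm).
  { intros b; apply Hix. }
  { intro E; subst; simpl in Hlx; lia. }
  assert (Hyx : lt le y x) by (apply Hix; auto).
  exists y. split.
  - split; auto. intros (c&H1&H2). apply Hix in H2. apply Hm in H2.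
    destruct H1 as [H1 N]. apply N. destruct Ht as (_&Ha&_); auto.
  - pose proof (lt_lev Ht Hyx).
    destruct (lev_list Ht y) as (ly&Hny&Hiy&Hly).
    assert (length lx <= length (y :: ly)).
    { apply NoDup_incl_length; auto. intros b Hb.
      destruct (classic (b = y)) as [->|N]; [left; auto|right].
      apply Hiy. split; auto. }
    simpl in H0. lia.
Qed.

Lemma anc (T : Type) (le : T -> T -> Prop) (Ht : is_tree le) d : forall x j,
  lev le x = j + d -> exists y, le y x /\ lev le y = j.
Proof.
  induction d; intros x j Hx.
  - exists x; split; [destruct Ht; auto | lia].
  - rewrite Nat.add_succ_r in Hx. destruct (parent Ht Hx) as (y&[[Hyx _] _]&Hy).
    destruct (IHd y j Hy) as (z&Hz&Hzl). exists z; split; auto.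
    destruct Ht as (_&_&Htr&_); eauto.
Qed.

Lemma restr_eq (T : Type) (le : T -> T -> Prop) (Ht : is_tree le) b x k :
  le b x -> lev le b = k -> restr le x k = b.
Proof.
  intros Hb Hl. unfold restr.
  pose proof (@epsilon_spec T (inhabits x) (fun b => le b x /\ lev le b = k)
     (ex_intro _ b (conj Hb Hl))) as [H1 H2].
  set (r := epsilon _ _) in *.
  destruct (comp_below Ht H1 Hb) as [H|H].
  - apply (le_same_lev Ht); auto; lia.
  - symmetry; apply (le_same_lev Ht); auto; lia.
Qed.

Lemma sp_step (T Sigma : Type) (le : T -> T -> Prop) (S : T -> list T -> Sigma -> option T)
  (HS : S_tree le S) (H : T -> T) (Hs : shape_preserving le S H) z y :
  imm_succ le z y -> lt le (H z) (H y).
Proof.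
  destruct HS as (Ht&_&_&_&HS1&_&HS3).
  destruct Hs as (_&_&Hii&_).
  intro Hzy. destruct (HS3 _ _ Hzy) as (p&c&Hp).
  destruct (Hii _ _ _ _ Hp) as (b'&Hb'&Hle).
  destruct (HS1 _ _ _ _ Hb') as [[[H1 N] _] _].
  destruct Ht as (Hr&Ha&Htr&_).
  split; eauto. intro E. rewrite <- E in Hle. apply N; auto.
Qed.

Lemma sp_mono (T Sigma : Type) (le : T -> T -> Prop) (S : T -> list T -> Sigma -> option T)
  (HS : S_tree le S) (H : T -> T) (Hs : shape_preserving le S H) d : forall x y,
  le x y -> lev le y = lev le x + d -> lev le (H x) + d <= lev le (H y).
Proof.
  assert (Ht : is_tree le) by (destruct HS; auto).
  induction d; intros x y Hxy Hl.
  - rewrite (le_same_lev Ht Hxy) by lia. lia.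
  - assert (Hy : lev le y = Datatypes.S (lev le x + d)) by lia.
    destruct (parent Ht Hy) as (z&Hz&Hzl).
    assert (Nxy : x <> y) by (intro E; subst; lia).
    assert (Hxz : le x z).
    { destruct Hz as [[Hzy Nz] _].
      destruct (comp_below Ht Hxy Hzy) as [|Hzx]; auto.
      rewrite (le_same_lev Ht Hzx); [destruct Ht; auto|].
      destruct (classic (z = x)) as [->|N]; auto.
      pose proof (lt_lev Ht (conj Hzx N)). lia. }
    specialize (IHd x z Hxz ltac:(lia)).
    pose proof (lt_lev Ht (sp_step HS Hs Hz)). lia.
Qed.

Lemma sp_ge (T Sigma : Type) (le : T -> T -> Prop) (S : T -> list T -> Sigma -> option T)
  (HS : S_tree le S) (H : T -> T) (Hs : shape_preserving le S H) x :
  lev le x <= lev le (H x).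
Proof.
  assert (Ht : is_tree le) by (destruct HS; auto).
  destruct (anc Ht (d := lev le x) (x := x) (j := 0) ltac:(lia)) as (r&Hr&Hrl).
  pose proof (sp_mono HS Hs (d := lev le x) Hr ltac:(lia)). lia.
Qed.

Lemma sp_Pm (T Sigma : Type) (le : T -> T -> Prop) (S : T -> list T -> Sigma -> option T)
  (HS : S_tree le S) (H : T -> T) (Hs : shape_preserving le S H) l :
  (forall y, lev le y < l -> H y = y) -> forall x, lev le x = l -> le x (H x).
Proof.
  intros Hid x Hx.
  pose proof HS as (Ht&_&_&_&HS1&_&HS3).
  destruct Hs as (_&_&Hii&Hiii).
  destruct l as [|k].
  - apply Hiii; auto. destruct Ht; auto.
  - destruct (parent Ht Hx) as (y&Hy&Hyl).
    destruct (HS3 _ _ Hy) as (p&c&Hp).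
    destruct (HS1 _ _ _ _ Hp) as [_ Hpl].
    destruct (Hii _ _ _ _ Hp) as (b'&Hb'&Hle).
    rewrite Hid in Hb' by lia.
    rewrite (map_ext_in H (fun a => a)) in Hb'.
    + rewrite map_id in Hb'. congruence.
    + intros a Ha. apply Hid. specialize (Hpl a Ha). lia.
Qed.

Lemma skip_id (T Sigma : Type) (le : T -> T -> Prop) (S : T -> list T -> Sigma -> option T)
  (HS : S_tree le S) (H : T -> T) (Hs : shape_preserving le S H) j :
  skips_only le H j -> forall l, l <= j -> forall x, lev le x < l -> H x = x.
Proof.
  assert (Ht : is_tree le) by (destruct HS; auto).
  intros Hsk l. induction l as [|l IH]; intros Hl x Hx; [lia|].
  assert (Il : forall y, lev le y < l -> H y = y) by (apply IH; lia).
  destruct (classic (lev le x < l)) as [|Hxl]; auto.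
  assert (Ex : lev le x = l) by lia.
  destruct (proj2 (Hsk l) ltac:(lia)) as (a&Ha).
  pose proof (sp_ge HS Hs a).
  assert (lev le a = l).
  { destruct (classic (lev le a < l)) as [Hal|]; [|lia].
    rewrite (Il a Hal) in Ha. lia. }
  pose proof Hs as (_&Hlp&_).
  assert (lev le (H x) = l) by (rewrite <- Ha; apply Hlp; auto; lia).
  symmetry. apply (le_same_lev Ht); [apply (sp_Pm HS Hs Il); auto | lia].
Qed.

Lemma skip_up (T Sigma : Type) (le : T -> T -> Prop) (S : T -> list T -> Sigma -> option T)
  (HS : S_tree le S) (H : T -> T) (Hs : shape_preserving le S H) j :
  skips_only le H j -> forall z, j <= lev le z -> lev le z + 1 <= lev le (H z).
Proof.
  assert (Ht : is_tree le) by (destruct HS; auto).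
  intros Hsk z Hz.
  destruct (anc Ht (d := lev le z - j) (x := z) (j := j) ltac:(lia)) as (u&Hu&Hul).
  pose proof (sp_ge HS Hs u).
  assert (lev le (H u) <> j) by (intro E; apply (proj1 (Hsk j)); eauto).
  pose proof (sp_mono HS Hs (d := lev le z - j) Hu ltac:(lia)). lia.
Qed.

Lemma ftil_eq (T : Type) (le : T -> T -> Prop) (f : T -> T) k x :
  (forall a b, lev le a = k -> lev le b = k -> lev le (f a) = lev le (f b)) ->
  lev le x = k -> ftil le f k = lev le (f x).
Proof.
  intros Hp Hx. unfold ftil.
  pose proof (@epsilon_spec nat (inhabits 0) (fun j => exists a, lev le a = k /\ lev le (f a) = j)
     (ex_intro _ _ (ex_intro _ x (conj Hx eq_refl)))) as (a&Ha&Hj).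
  rewrite <- Hj. apply Hp; auto.
Qed.

Lemma core (T : Type) (le : T -> T -> Prop) (Sigma : Type)
  (S : T -> list T -> Sigma -> option T) (M : (T -> T) -> Prop)
  (HSM : SM_tree le S M) n m w (Hw : lev le w = n) d : forall F',
  M F' -> (forall a, lev le a < n -> lev le (F' a) < m) ->
  (forall a, lev le a = n -> lev le (F' a) = m + d) ->
  exists F1 G, M F1 /\ M G /\ (forall y, lev le y < m -> G y = y) /\
    (forall a, lev le a <= n -> G (F1 a) = F' a) /\
    (forall a, lev le a = n -> lev le (F1 a) = m) /\
    (forall a, lev le a < n -> F1 a = F' a).
Proof.
  pose proof HSM as (HS & Hsp & Hid & Hcomp & Hlim & HM2 & HM3).
  assert (Ht : is_tree le) by (destruct HS; auto).
  induction d; intros F' HF' Hlo Hn.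
  - exists F', (fun a => a). repeat split; auto.
    intros a Ha; rewrite Hn; auto.
  - pose proof (Hsp _ HF') as HsF'.
    assert (Hft : ftil le F' n = m + Datatypes.S d).
    { rewrite (ftil_eq (x := w)); auto. intros a b Ha Hb.
      destruct HsF' as (_&Hlp&_). apply Hlp; auto; congruence. }
    destruct (HM2 n F' HF') as (F1'&F2&HF1'&HF2&Hsk&Hc).
    { lia. }
    { rewrite Hft. intros (a&Ha).
      destruct (Nat.lt_trichotomy (lev le a) n) as [Hl|[Hl|Hl]].
      - specialize (Hlo a Hl). lia.
      - specialize (Hn a Hl). lia.
      - destruct (anc Ht (d := lev le a - n) (x := a) (j := n) ltac:(lia)) as (u&Hu&Hul).
        pose proof (sp_mono HS HsF' (d := lev le a - n) Hu ltac:(lia)).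
        specialize (Hn u Hul). lia. }
    rewrite Hft in Hsk. replace (m + Datatypes.S d - 1) with (m + d) in Hsk by lia.
    pose proof (Hsp _ HF2) as HsF2.
    pose proof (Hsp _ HF1') as HsF1'.
    assert (E1 : forall a, lev le a < n -> F1' a = F' a).
    { intros a Ha. rewrite <- (Hc a) by lia.
      pose proof (sp_ge HS HsF2 (F1' a)).
      rewrite (Hc a) in H by lia. specialize (Hlo a Ha).
      symmetry. apply (skip_id HS HsF2 Hsk (l := m + d)); lia. }
    assert (E2 : forall a, lev le a = n -> lev le (F1' a) = m + d).
    { intros a Ha. pose proof (Hc a ltac:(lia)) as Hca.
      pose proof (Hn a Ha) as Hna.
      destruct (classic (lev le (F1' a) < m + d)) as [Hl|Hl].
      - rewrite (skip_id HS HsF2 Hsk (l := m + d)) in Hca by lia.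
        rewrite Hca in Hl. lia.
      - pose proof (skip_up HS HsF2 Hsk (z := F1' a) ltac:(lia)).
        rewrite Hca in H. lia. }
    assert (Hlo' : forall a, lev le a < n -> lev le (F1' a) < m).
    { intros a Ha; rewrite E1; auto. }
    destruct (IHd F1' HF1' Hlo' E2) as (F1&G&HF1&HG&HGid&HGc&HF1n&HF1lo).
    exists F1, (fun y => F2 (G y)). repeat split; auto.
    + intros y Hy. rewrite HGid by auto.
      apply (skip_id HS HsF2 Hsk (l := m + d)); lia.
    + intros a Ha. rewrite HGc by auto. apply Hc; auto.
    + intros a Ha. rewrite HF1lo by auto. apply E1; auto.
Qed.

Theorem mainTheorem7 (T : Type) (le : T -> T -> Prop) (Sigma : Type)
  (S : T -> list T -> Sigma -> option T) (M : (T -> T) -> Prop)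
  (HSM : SM_tree le S M)
  (n : nat) (f : T -> T) (hf : inAM le M f (n + 1)) (m : nat)
  (hm : (n = 0 /\ m <= ftil le f 0) \/
        (0 < n /\ ftil le f (n - 1) < m /\ m <= ftil le f n)) :
  inAM le M (fcut le f n m) (n + 1) /\
  exists g : T -> T, inAMnk le M g m 1 /\
    forall a, lev le a <= n -> g (fcut le f n m a) = f a.
Proof.
  pose proof HSM as (HS & Hsp & Hid & Hcomp & Hlim & HM2 & HM3).
  assert (Ht : is_tree le) by (destruct HS; auto).
  destruct hf as (_&F&HF&HfF).
  pose proof (Hsp _ HF) as HsF.
  pose proof HsF as (_&Hlp&_).
  destruct (classic (exists w, lev le w = n)) as [(w&Hw)|Nw].
  2:{ assert (Hc : forall a, lev le a <= n -> fcut le f n m a = f a).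
      { intros a Ha. unfold fcut. destruct (Nat.eqb_spec (lev le a) n); auto.
        exfalso; eauto. }
      split.
      - split; [lia|]. exists F; split; auto. intros a Ha. rewrite Hc by lia. apply HfF; auto.
      - exists (fun a => a). split.
        + exists (fun a => a). repeat split; auto.
        + intros a Ha. apply Hc; auto. }
  assert (Hfl : forall k x, k <= n -> lev le x = k -> ftil le f k = lev le (F x)).
  { intros k x Hk Hx. rewrite (ftil_eq (x := x)); auto.
    - f_equal. apply HfF. lia.
    - intros a b Ha Hb. rewrite !HfF by lia. apply Hlp; auto; congruence. }
  assert (Hk : m <= lev le (F w)).
  { destruct hm as [[E H]|(_&_&H)]; [rewrite <- E in H|]; rewrite <- (Hfl n w); auto. }
  assert (Hlo : forall a, lev le a < n -> lev le (F a) < m).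
  { intros a Ha. destruct hm as [[-> _]|(Hn&H1&_)]; [lia|].
    destruct (anc Ht (d := 1) (x := w) (j := n - 1) ltac:(lia)) as (w1&Hw1&Hw1l).
    destruct (anc Ht (d := n - 1 - lev le a) (x := w1) (j := lev le a) ltac:(lia)) as (u&Hu&Hul).
    rewrite (Hfl (n - 1) w1) in H1 by (auto; lia).
    pose proof (sp_mono HS HsF (d := n - 1 - lev le a) Hu ltac:(lia)).
    assert (lev le (F a) = lev le (F u)) by (apply Hlp; auto).
    lia. }
  assert (Hn : forall a, lev le a = n -> lev le (F a) = m + (lev le (F w) - m)).
  { intros a Ha. rewrite (Hlp a w); auto; congruence || lia. }
  destruct (core HSM Hw HF Hlo Hn) as (F1&G&HF1&HG&HGid&HGc&HF1n&HF1lo).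
  assert (Hcut : forall a, lev le a <= n -> fcut le f n m a = F1 a).
  { intros a Ha. unfold fcut. destruct (Nat.eqb_spec (lev le a) n) as [E|E].
    - rewrite HfF by lia. rewrite <- (HGc a) by lia.
      apply (restr_eq Ht); auto.
      apply (sp_Pm HS (Hsp _ HG) HGid); auto.
    - rewrite HF1lo by lia. apply HfF; lia. }
  split.
  - split; [lia|]. exists F1; split; auto. intros a Ha. apply Hcut; lia.
  - exists G. split.
    + exists G. repeat split; auto.
    + intros a Ha. rewrite Hcut by auto. rewrite HGc by auto. symmetry; apply HfF; lia.
Qed.
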